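(* Let $\mathcal{U}$ be a dead-ending universe and let $G$ be any finite partizan game. Then $G$ is Left $\mathcal{U}$-strong if and only if $o(G+X)\geq\mathscr{N}$ for all $X\in T_n(\mathcal{U})$, where $n$ is the formal birthday of $G$.
   Context: $o(G)$ is the misère outcome class, ordered $\mathscr{L} > \mathscr{N} > \mathscr{R}$, $\mathscr{L} > \mathscr{P} > \mathscr{R}$. A universe is a set of finite partizan games closed under options, disjunctive sums, conjugates, and forming $\{\mathscr{G}^L\mid\mathscr{G}^R\}$ from nonempty finite subsets of it. A Left end has no Left option; a Left dead-end is a game all of whose subpositions are Left ends (similarly Right). A universe is dead-ending if in every game of it, every subposition that is an end is a dead-end. $G$ is Left $\mathcal{U}$-strong if $o(G+X)\geq\mathscr{N}$ for every Left end $X\in\mathcal{U}$. The formal birthday of $G$ is the height of its game tree. The truncation is $\tau_0(G)=0$, $\tau_{n+1}(G)=\{\tau_n(G^L)\mid\tau_n(G^R)\}$. For Left dead-ends, $G\geq H$ means $o(G+X)\geq o(H+X)$ for all $X$ in every universe. Let $\mathcal{A}$ be the set of Left ends of $\mathcal{U}$ and $\operatorname{cl}(\mathcal{A})$ the smallest set containing $\mathcal{A}$ closed under options and sums; the test set $T_n(\mathcal{U})$ is the set of minimal elements (with respect to $\geq$) of $\{\tau_n(G):G\in\operatorname{cl}(\mathcal{A})\}$. *)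

(* Defs.v *)
From Stdlib Require List.
From mathcomp Require Import all_boot.
Set Implicit Arguments. Unset Strict Implicit. Unset Printing Implicit Defensive.

Inductive game : Type := Game of seq game & seq game.

Definition lopts (G : game) : seq game := let: Game l _ := G in l.
Definition ropts (G : game) : seq game := let: Game _ r := G in r.

Definition is_option (H G : game) : Prop := List.In H (lopts G) \/ List.In H (ropts G).

Inductive subpos : game -> game -> Prop :=
| subpos_refl G : subpos G G
| subpos_opt H K G : is_option K G -> subpos H K -> subpos H G.

Fixpoint gadd (G H : game) {struct G} : game :=
  let fix addH (H : game) : game :=
    match G, H with
    | Game gl gr, Game hl hr =>
        Game ([seq gadd g H | g <- gl] ++ [seq addH h | h <- hl])
             ([seq gadd g H | g <- gr] ++ [seq addH h | h <- hr])
    end in addH H.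

Fixpoint conj (G : game) : game :=
  match G with Game gl gr => Game [seq conj g | g <- gr] [seq conj g | g <- gl] end.

(* Misere play (a player unable to move wins).
   win G = (Left wins moving first in G, Right wins moving first in G). *)
Fixpoint win (G : game) : bool * bool :=
  match G with
  | Game gl gr =>
      (nilp gl || has (fun g => ~~ (win g).2) gl,
       nilp gr || has (fun g => ~~ (win g).1) gr)
  end.

Inductive outcome := oL | oN | oP | oR.

Definition o (G : game) : outcome :=
  match win G with
  | (true, false) => oL
  | (true, true) => oN
  | (false, false) => oP
  | (false, true) => oR
  end.

Definition outcome_le (a b : outcome) : bool :=
  match a, b with
  | oR, _ => true
  | _, oL => true
  | oN, oN => true
  | oP, oP => true
  | _, _ => false
  end.

Definition left_end (G : game) : Prop := lopts G = [::].
Definition right_end (G : game) : Prop := ropts G = [::].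
Definition left_dead_end (G : game) : Prop := forall H, subpos H G -> left_end H.
Definition right_dead_end (G : game) : Prop := forall H, subpos H G -> right_end H.

Definition universe (U : game -> Prop) : Prop :=
  (forall G H, U G -> is_option H G -> U H) /\
  (forall G H, U G -> U H -> U (gadd G H)) /\
  (forall G, U G -> U (conj G)) /\
  (forall gl gr : seq game, gl <> [::] -> gr <> [::] ->
      (forall g, List.In g gl -> U g) -> (forall g, List.In g gr -> U g) ->
      U (Game gl gr)).

Definition dead_ending (U : game -> Prop) : Prop :=
  forall G, U G -> forall H, subpos H G ->
    (left_end H -> left_dead_end H) /\ (right_end H -> right_dead_end H).

Definition left_strong (U : game -> Prop) (G : game) : Prop :=
  forall X, U X -> left_end X -> outcome_le oN (o (gadd G X)).

Fixpoint birthday (G : game) : nat :=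
  match G with
  | Game gl gr => maxn (foldr (fun g m => maxn (birthday g).+1 m) 0 gl)
                   (foldr (fun g m => maxn (birthday g).+1 m) 0 gr)
  end.

Fixpoint trunc (n : nat) (G : game) : game :=
  match n with
  | 0 => Game [::] [::]
  | n'.+1 => Game [seq trunc n' g | g <- lopts G] [seq trunc n' g | g <- ropts G]
  end.

Definition gge (G H : game) : Prop :=
  forall X, outcome_le (o (gadd H X)) (o (gadd G X)).

Inductive cl (U : game -> Prop) : game -> Prop :=
| cl_base X : U X -> left_end X -> cl U X
| cl_opt G H : cl U G -> is_option H G -> cl U H
| cl_sum G H : cl U G -> cl U H -> cl U (gadd G H).

Definition trunc_set (U : game -> Prop) (n : nat) (X : game) : Prop :=
  exists G, cl U G /\ X = trunc n G.

Definition test_set (U : game -> Prop) (n : nat) (X : game) : Prop :=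
  trunc_set U n X /\ (forall Y, trunc_set U n Y -> gge X Y -> gge Y X).

(* Main.v *)
Require Import Defs.
From mathcomp Require Import all_boot.
From Stdlib Require Import Classical.
Set Implicit Arguments. Unset Strict Implicit. Unset Printing Implicit Defensive.

Definition game_ind' (P : game -> Prop)
  (H : forall l r, (forall g, List.In g l -> P g) -> (forall g, List.In g r -> P g) -> P (Game l r)) :
  forall G, P G :=
  fix F G := match G with Game l r =>
    H l r
     ((fix aux (s : seq game) : forall g, List.In g s -> P g :=
        match s with
        | [::] => fun g (h : List.In g [::]) => False_ind _ h
        | x :: s' => fun g h => match h with
                     | or_introl e => eq_ind x P (F x) g e
                     | or_intror h' => aux s' g h' end end) l)
     ((fix aux (s : seq game) : forall g, List.In g s -> P g :=
        match s with
        | [::] => fun g (h : List.In g [::]) => False_ind _ h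
        | x :: s' => fun g h => match h with
                     | or_introl e => eq_ind x P (F x) g e
                     | or_intror h' => aux s' g h' end end) r)
  end.

Lemma gadd_lopts A B : lopts (gadd A B) =
  [seq gadd a B | a <- lopts A] ++ [seq gadd A b | b <- lopts B].
Proof. by case: A => ? ?; case: B. Qed.
Lemma gadd_ropts A B : ropts (gadd A B) =
  [seq gadd a B | a <- ropts A] ++ [seq gadd A b | b <- ropts B].
Proof. by case: A => ? ?; case: B. Qed.
Lemma winE G : win G = (nilp (lopts G) || has (fun g => ~~ (win g).2) (lopts G),
                        nilp (ropts G) || has (fun g => ~~ (win g).1) (ropts G)).
Proof. by case: G. Qed.
Lemma birthdayE l r : birthday (Game l r) =
  maxn (foldr (fun g m => maxn (birthday g).+1 m) 0 l)
       (foldr (fun g m => maxn (birthday g).+1 m) 0 r).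
Proof. by []. Qed.

Lemma hasP' (A : Type) (p : pred A) (s : seq A) :
  has p s <-> exists2 x, List.In x s & p x.
Proof.
elim: s => [|x s IH] /=; first by split=> // -[].
split.
- case/orP=> [px|/IH [y ys py]]; first by exists x; [left|].
  by exists y; [right|].
- case=> y [<-|ys] py; first by rewrite py.
  by apply/orP; right; apply/IH; exists y.
Qed.

Lemma has_map' (A B : Type) (p : pred B) (f : A -> B) s :
  has p (map f s) = has (fun x => p (f x)) s.
Proof. by elim: s => //= x s ->. Qed.

Lemma eq_has' (A : Type) (p q : pred A) s :
  (forall x, List.In x s -> p x = q x) -> has p s = has q s.
Proof.
elim: s => //= x s IH h; rewrite h; last by left.
by rewrite IH // => y ys; apply: h; right.
Qed.

Lemma has_rel (A B : Type) (R : A -> B -> Prop) (p : pred A) (q : pred B) l1 l2 :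
  (forall a, List.In a l1 -> exists2 b, List.In b l2 & R a b) ->
  (forall b, List.In b l2 -> exists2 a, List.In a l1 & R a b) ->
  (forall a b, List.In a l1 -> R a b -> p a = q b) -> has p l1 = has q l2.
Proof.
move=> h1 h2 h3; apply/idP/idP.
- case/hasP'=> a al pa; case: (h1 a al) => b bl Rab.
  by apply/hasP'; exists b => //; rewrite -(h3 a b).
- case/hasP'=> b bl qb; case: (h2 b bl) => a al Rab.
  by apply/hasP'; exists a => //; rewrite (h3 a b).
Qed.

Lemma nilp_rel (A B : Type) (R : A -> B -> Prop) (l1 : seq A) (l2 : seq B) :
  (forall a, List.In a l1 -> exists2 b, List.In b l2 & R a b) ->
  (forall b, List.In b l2 -> exists2 a, List.In a l1 & R a b) ->
  nilp l1 = nilp l2.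
Proof.
case: l1 => [|a l1]; case: l2 => [|b l2] //= h1 h2.
- by case: (h2 b (or_introl erefl)).
- by case: (h1 a (or_introl erefl)).
Qed.

Lemma nilp_cat (A : Type) (s t : seq A) : nilp (s ++ t) = nilp s && nilp t.
Proof. by case: s. Qed.
Lemma nilp_map (A B : Type) (f : A -> B) s : nilp (map f s) = nilp s.
Proof. by case: s. Qed.

Lemma winpair_eq (p q : bool * bool) : p.1 = q.1 -> p.2 = q.2 -> p = q.
Proof. by case: p; case: q => /= ? ? ? ? -> ->. Qed.

Lemma orb_perm (n1 n2 a b c d : bool) : a = d -> b = c ->
  (n1 && n2) || (a || b) = (n2 && n1) || (c || d).
Proof. by move=> -> ->; rewrite andbC (orbC d). Qed.

Lemma win_comm A B : win (gadd A B) = win (gadd B A).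
Proof.
elim/game_ind': A B => la ra IHl IHr B.
elim/game_ind': B => lb rb IHl' IHr'.
apply: winpair_eq; rewrite winE [win (gadd (Game lb rb) _)]winE
  !gadd_lopts !gadd_ropts !nilp_cat !nilp_map !has_cat !has_map';
  apply: orb_perm; apply: eq_has' => x xl.
- by rewrite IHl.
- by rewrite IHl'.
- by rewrite IHr.
- by rewrite IHr'.
Qed.

Definition bf (s : seq game) := foldr (fun g m => maxn (birthday g).+1 m) 0 s.

Lemma bf_ge g s : List.In g s -> birthday g < bf s.
Proof.
elim: s => //= x s IH [->|gs]; first exact: leq_maxl.
exact: leq_trans (IH gs) (leq_maxr _ _).
Qed.

Lemma bf_le s k : (forall g, List.In g s -> birthday g < k) -> bf s <= k.
Proof.
elim: s => //= x s IH h; rewrite geq_max h; last by left.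
by apply: IH => g gs; apply: h; right.
Qed.

Lemma bday_l g l r : List.In g l -> birthday g < birthday (Game l r).
Proof. move=> h; rewrite birthdayE; exact: leq_trans (bf_ge h) (leq_maxl _ _). Qed.
Lemma bday_r g l r : List.In g r -> birthday g < birthday (Game l r).
Proof. move=> h; rewrite birthdayE; exact: leq_trans (bf_ge h) (leq_maxr _ _). Qed.

Lemma bday_trunc n G : birthday (trunc n G) <= n.
Proof.
elim: n G => [|n IH] G; first by [].
rewrite [trunc _ _]/= birthdayE geq_max; apply/andP; split; apply: bf_le => g;
  case/List.in_map_iff => x [<- _]; rewrite ltnS; exact: IH.
Qed.

Fixpoint ldead (G : game) : bool :=
  match G with Game l r => nilp l && all ldead r end.

Lemma allP' (A : Type) (p : pred A) s : all p s <-> forall x, List.In x s -> p x.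
Proof.
elim: s => [|x s IH] /=; first by split.
split.
- case/andP=> px /IH h y [<-|ys] //; exact: h.
- move=> h; rewrite h; last by left.
  by apply/IH => y ys; apply: h; right.
Qed.

Lemma ldead_lopts X : ldead X -> lopts X = [::].
Proof. by case: X => [[|? ?] ?]. Qed.
Lemma ldead_ropts X x : ldead X -> List.In x (ropts X) -> ldead x.
Proof. case: X => l r /= /andP [_ /allP' h]; exact: h. Qed.

Lemma ldeadE X : ldead X = nilp (lopts X) && all ldead (ropts X).
Proof. by case: X. Qed.

Lemma ldead_sum A B : ldead A -> ldead B -> ldead (gadd A B).
Proof.
elim/game_ind': A B => la ra IHl IHr B.
elim/game_ind': B => lb rb IHl' IHr' hA hB.
rewrite ldeadE gadd_lopts gadd_ropts (ldead_lopts hA) (ldead_lopts hB) /=.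
rewrite all_cat; apply/andP; split; apply/allP' => y /List.in_map_iff [x [<- xs]].
- exact: IHr xs _ (ldead_ropts hA xs) hB.
- exact: IHr' xs hA (ldead_ropts hB xs).
Qed.

Lemma ldead_of X : left_dead_end X -> ldead X.
Proof.
elim/game_ind': X => l r IHl IHr h.
rewrite ldeadE (h _ (subpos_refl _)) /=; apply/allP' => x xr; apply: IHr => //.
move=> H sH; apply: h; apply: subpos_opt sH; by right.
Qed.

Lemma lopts_trunc k X : lopts X = [::] -> lopts (trunc k X) = [::].
Proof. by case: k => //= k ->. Qed.

Lemma key G : forall X k, ldead X -> birthday G <= k ->
  (win (gadd G X)).1 = (win (gadd G (trunc k X))).1 /\
  (birthday G < k -> (win (gadd G X)).2 = (win (gadd G (trunc k X))).2).
Proof.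
elim/game_ind': G => l r IHl IHr.
have P1 : forall X k, ldead X -> birthday (Game l r) <= k ->
   (win (gadd (Game l r) X)).1 = (win (gadd (Game l r) (trunc k X))).1.
  move=> X k hX hk.
  rewrite !winE !gadd_lopts (lopts_trunc k (ldead_lopts hX)) (ldead_lopts hX) /=.
  rewrite !cats0 !nilp_map !has_map'; congr (_ || _); apply: eq_has' => g gl.
  by case: (IHl g gl X k hX (leq_trans (ltnW (bday_l r gl)) hk)) => _ ->
     //; exact: leq_trans (bday_l r gl) hk.
move=> X k hX hk; split; first exact: P1.
case: k hk => // k hk hk'.
rewrite !winE !gadd_ropts /= !nilp_cat !nilp_map !has_cat !has_map'.
congr (_ && _ || (_ || _)).
- apply: eq_has' => g gr.
  by case: (IHr g gr X k.+1 hX (leq_trans (ltnW (bday_r l gr)) hk)) => ->.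
- apply: eq_has' => x xr; congr (~~ _); exact: (P1 x k (ldead_ropts hX xr) hk').
Qed.

Inductive sim : game -> game -> Prop :=
  SimI A B :
   (forall a, List.In a (lopts A) -> exists2 b, List.In b (lopts B) & sim a b) ->
   (forall b, List.In b (lopts B) -> exists2 a, List.In a (lopts A) & sim a b) ->
   (forall a, List.In a (ropts A) -> exists2 b, List.In b (ropts B) & sim a b) ->
   (forall b, List.In b (ropts B) -> exists2 a, List.In a (ropts A) & sim a b) ->
   sim A B.

Lemma sim_inv A B : sim A B ->
   (forall a, List.In a (lopts A) -> exists2 b, List.In b (lopts B) & sim a b) /\
   (forall b, List.In b (lopts B) -> exists2 a, List.In a (lopts A) & sim a b) /\
   (forall a, List.In a (ropts A) -> exists2 b, List.In b (ropts B) & sim a b) /\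
   (forall b, List.In b (ropts B) -> exists2 a, List.In a (ropts A) & sim a b).
Proof. by case. Qed.

Lemma sim_win Y : forall Y' X, sim Y Y' -> win (gadd Y X) = win (gadd Y' X).
Proof.
elim/game_ind': Y => l r IHl IHr Y' X hs.
case: (sim_inv hs) => h1 [h2 [h3 h4]].
elim/game_ind': X => xl xr IHxl IHxr.
apply: winpair_eq; rewrite winE [win (gadd Y' _)]winE !gadd_lopts !gadd_ropts
  !nilp_cat !nilp_map !has_cat !has_map'.
- congr (_ && _ || (_ || _)).
  + exact: nilp_rel h1 h2.
  + apply: has_rel h1 h2 _ => a b al sab; by rewrite (IHl a al b).
  + by apply: eq_has' => x xl'; rewrite IHxl.
- congr (_ && _ || (_ || _)).
  + exact: nilp_rel h3 h4.
  + apply: has_rel h3 h4 _ => a b al sab; by rewrite (IHr a al b).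
  + by apply: eq_has' => x xl'; rewrite IHxr.
Qed.

Fixpoint subs (s : seq game) : seq (seq game) :=
  match s with
  | [::] => [:: [::]]
  | x :: s' => subs s' ++ map (cons x) (subs s')
  end.

Fixpoint E n : seq game :=
  match n with
  | 0 => [:: Game [::] [::]]
  | n'.+1 => List.flat_map (fun l => map (fun r => Game l r) (subs (E n'))) (subs (E n'))
  end.

Lemma sub_prop (P : game -> Prop) s :
  exists2 t, List.In t (subs s) & (forall x, List.In x t <-> List.In x s /\ P x).
Proof.
elim: s => [|x s [t ts ht]] /=.
  by exists [::]; [left | move=> x; split => // -[]].
case: (classic (P x)) => px.
- exists (x :: t).
    by apply: List.in_or_app; right; apply: List.in_map.
  move=> y /=; split.
  + by case=> [<-|/ht [? ?]]; split => //; [left|right].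
  + by case=> [[<-|ys] py]; [left | right; apply/ht].
- exists t; first by apply: List.in_or_app; left.
  move=> y; rewrite ht /=; split.
  + by case=> ys py; split => //; right.
  + by case=> [[<-|ys] py] //.
Qed.

Lemma coverE Y : forall n, birthday Y <= n -> exists2 e, List.In e (E n) & sim Y e.
Proof.
elim/game_ind': Y => l r IHl IHr [|n] hb.
- exists (Game [::] [::]); first by left.
  have l0 : l = [::].
    case: l IHl hb => // g l' _ hb.
    by have := @bday_l g (g :: l') r (or_introl erefl); move/leq_trans/(_ hb).
  have r0 : r = [::].
    case: r IHr hb => // g r' _ hb.
    by have := @bday_r g l (g :: r') (or_introl erefl); move/leq_trans/(_ hb).
  by subst; apply: SimI => a [].
- case: (sub_prop (fun e => exists2 a, List.In a l & sim a e) (E n)) => tl tlin htl.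
  case: (sub_prop (fun e => exists2 a, List.In a r & sim a e) (E n)) => tr trin htr.
  exists (Game tl tr).
    apply/List.in_flat_map; exists tl; split => //; exact: List.in_map.
  apply: SimI => /=.
  + move=> a al; case: (IHl a al n) => [|e en sae].
      by rewrite -ltnS; exact: leq_trans (bday_l r al) hb.
    by exists e => //; apply/htl; split => //; exists a.
  + by move=> b /htl [_ [a al sab]]; exists a.
  + move=> a al; case: (IHr a al n) => [|e en sae].
      by rewrite -ltnS; exact: leq_trans (bday_r l al) hb.
    by exists e => //; apply/htr; split => //; exists a.
  + by move=> b /htr [_ [a al sab]]; exists a.
Qed.

Lemma filt (A : Type) (P : A -> Prop) (L : list A) :
  exists L', (forall x, List.In x L' <-> List.In x L /\ P x) /\
    (forall y, List.In y L -> ~ P y -> length L' < length L) /\ length L' <= length L.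
Proof.
elim: L => [|a L [L' [h1 [h2 h3]]]].
  by exists [::]; split => [x|]; [split => // -[]|split].
case: (classic (P a)) => pa.
- exists (a :: L'); split; last split.
  + move=> x /=; split.
    * by case=> [<-|/h1 [? ?]]; split => //; [left|right].
    * by case=> [[<-|xs] px]; [left|right; apply/h1].
  + by move=> y /= [<-|ys] //; exact: h2.
  + by [].
- exists L'; split; last split.
  + move=> x; rewrite h1 /=; split.
    * by case=> xs px; split => //; right.
    * by case=> [[<-|xs] px].
  + by move=> y _ _ /=; rewrite ltnS.
  + by apply: leq_trans h3 _.
Qed.

Lemma min_exists (A : Type) (R : A -> A -> Prop) (Rrefl : forall x, R x x)
  (Rtrans : forall x y z, R x y -> R y z -> R x z) :
  forall n (L : list A), length L <= n -> forall y, List.In y L ->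
  exists2 z, List.In z L & (R z y /\ forall w, List.In w L -> R w z -> R z w).
Proof.
elim=> [|n IH] L hL y yL.
  by case: L hL yL.
case: (classic (forall w, List.In w L -> R w y -> R y w)) => hmin.
  by exists y.
have [w [wL [Rwy nRyw]]] : exists w, List.In w L /\ R w y /\ ~ R y w.
  apply: NNPP => hn; apply: hmin => w wL Rwy; apply: NNPP => nR.
  by apply: hn; exists w.
case: (filt (fun v => R v w) L) => L' [h1 [h2 h3]].
have hl : length L' <= n by rewrite -ltnS; exact: leq_trans (h2 y yL nRyw) hL.
case: (IH L' hl w) => [|z zL' [Rzw zmin]]; first by apply/h1.
case/h1: zL' => zL _.
exists z => //; split; first exact: Rtrans Rzw Rwy.
move=> v vL Rvz; apply: zmin => //; apply/h1; split => //; exact: Rtrans Rvz Rzw.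
Qed.

Lemma cl_prop U H : universe U -> dead_ending U -> cl U H -> U H /\ ldead H.
Proof.
move=> [uo [us _]] de; elim=> {H}.
- move=> X UX lX; split => //; apply: ldead_of.
  by case: (de X UX X (subpos_refl X)) => h _; apply: h.
- move=> G H _ [UG lG] op; split; first exact: uo op.
  case: op => op.
    by rewrite (ldead_lopts lG) in op.
  exact: ldead_ropts op.
- move=> G H _ [UG lG] _ [UH lH]; split; [exact: us | exact: ldead_sum].
Qed.

Lemma oN_win Y : outcome_le oN (o Y) = (win Y).1.
Proof. by rewrite /o; case: (win Y) => [[] []]. Qed.

Lemma ole_win Y Z : outcome_le (o Y) (o Z) -> (win Y).1 -> (win Z).1.
Proof. by rewrite /o; case: (win Y) => [[] []]; case: (win Z) => [[] []]. Qed.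

Lemma ole_refl a : outcome_le a a.
Proof. by case: a. Qed.
Lemma ole_trans a b c : outcome_le a b -> outcome_le b c -> outcome_le a c.
Proof. by case: a; case: b; case: c. Qed.

Lemma reps (S : game -> Prop) (l : list game) : exists L,
  (forall Y, List.In Y L -> S Y) /\
  (forall e, List.In e l -> (exists Y, S Y /\ sim Y e) -> exists2 Z, List.In Z L & sim Z e).
Proof.
elim: l => [|e l [L [h1 h2]]].
  by exists [::]; split => // e [].
case: (classic (exists Y, S Y /\ sim Y e)) => [[Y [SY sY]]|hn].
- exists (Y :: L); split.
    by move=> Z /= [<-|ZL] //; exact: h1.
  move=> e' /= [<-|el] h; first by exists Y => //; left.
  by case: (h2 e' el h) => Z ZL sZ; exists Z => //; right.
- exists L; split => // e' /= [<-|el] h //; exact: h2.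
Qed.

Theorem mainTheorem4 (U : game -> Prop) (G : game) :
  universe U -> dead_ending U ->
  (left_strong U G <->
   forall X, test_set U (birthday G) X -> outcome_le oN (o (gadd G X))).
Proof.
move=> hU hD; split.
- move=> hs X [[H [clH ->]] _].
  case: (cl_prop hU hD clH) => UH lH.
  have := hs H UH (ldead_lopts lH); rewrite !oN_win.
  by case: (@key G H (birthday G) lH (leqnn _)) => ->.
- move=> ht X UX lX.
  have ldX : ldead X.
    by apply: ldead_of; case: (hD X UX X (subpos_refl X)) => h _; apply: h.
  set n := birthday G.
  set S := trunc_set U n.
  have bS : forall Y, S Y -> birthday Y <= n by move=> Y [H [_ ->]]; exact: bday_trunc.
  case: (reps S (E n)) => L [hL1 hL2].
  have cov : forall Y, S Y -> exists2 Z, List.In Z L & forall W, win (gadd Y W) = win (gadd Z W).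
    move=> Y SY; case: (coverE (bS Y SY)) => e en sYe.
    case: (hL2 e en); first by exists Y.
    by move=> Z ZL sZe; exists Z => // W; rewrite (sim_win W sYe) (sim_win W sZe).
  have STX : S (trunc n X) by exists X; split => //; exact: cl_base.
  case: (cov _ STX) => Z0 Z0L eZ0.
  have [z zL [gz zmin]] := min_exists (R := fun z y => gge y z)
      (fun x W => ole_refl _)
      (fun x y z hxy hyz W => ole_trans (hxy W) (hyz W)) (leqnn (length L)) Z0L.
  have tz : test_set U n z.
    split; first exact: hL1.
    move=> W SW gzW; case: (cov W SW) => Z' Z'L eW.
    have gzZ' : gge z Z' by move=> V; rewrite /o -eW; exact: gzW V.
    move=> V; rewrite /o eW; exact: zmin Z' Z'L gzZ' V.
  have := ht z tz; rewrite !oN_win win_comm => wz.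
  have := ole_win (gz G) wz; rewrite /o -eZ0 win_comm.
  by case: (@key G X n ldX (leqnn _)) => <-.
Qed.
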